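(* For every integer $m\ge3$, $\mathrm{sn}(\mathrm{SUD}_m)=\underline{\mathrm{lcs}}(\mathrm{SUD}_m)=m^4-3m^2+3m$.
   Context: $\mathrm{SUD}_m$ is the hypergraph whose vertex set is the $m^2\times m^2$ grid $[m^2]\times[m^2]$ and whose $3m^2$ hyperedges are the $m^2$ rows, the $m^2$ columns, and the $m^2$ disjoint $m\times m$ blocks (the sets $\{(a,b): \lceil a/m\rceil=i,\lceil b/m\rceil=j\}$ for $i,j\in[m]$). A (weak) colouring of a hypergraph with $k$ colours is a map from its vertex set to $[k]$ such that no hyperedge is monochromatic; $\chi$ is the least $k$ for which such a colouring exists (here $\chi(\mathrm{SUD}_m)=2$). For a $\chi$-colouring $c$, a vertex set $S$ is a determining set if no other $\chi$-colouring agrees with $c$ on $S$; a critical set is an inclusion-minimal determining set. $\mathrm{scs}(H,c)$ and $\mathrm{lcs}(H,c)$ are the sizes of a smallest resp. largest critical set for $(H,c)$; $\mathrm{sn}(H)=\min_c\mathrm{scs}(H,c)$ and $\underline{\mathrm{lcs}}(H)=\min_c\mathrm{lcs}(H,c)$, minima over all $\chi(H)$-colourings $c$. *)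

(* Defs.v *)
From mathcomp Require Import all_boot.
Set Implicit Arguments. Unset Strict Implicit. Unset Printing Implicit Defensive.

Section Hyper.
Variables (V : finType) (E : {set {set V}}).

Definition colouring (k : nat) := {ffun V -> 'I_k}.

Definition proper k (c : colouring k) : bool :=
  [forall e in E, ~~ [forall x in e, forall y in e, c x == c y]].

(* chromatic number: least k admitting a proper k-colouring
   (bounded search; default #|V|.+1 if none exists) *)
Definition chi : nat :=
  \big[minn/#|V|.+1]_(k < #|V|.+2 | [exists c : colouring k, proper c]) (k : nat).

Definition determining k (c : colouring k) (S : {set V}) : bool :=
  [forall c' : colouring k, proper c' ==> [forall x in S, c' x == c x] ==> (c' == c)].

Definition critical k (c : colouring k) (S : {set V}) : bool :=
  determining c S && [forall S' : {set V}, (S' \proper S) ==> ~~ determining c S'].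

Definition scs k (c : colouring k) : nat :=
  \big[minn/#|V|]_(S : {set V} | critical c S) #|S|.
Definition lcs k (c : colouring k) : nat :=
  \max_(S : {set V} | critical c S) #|S|.

Definition sn : nat :=
  \big[minn/#|V|]_(c : colouring chi | proper c) scs c.
Definition lcs_min : nat :=
  \big[minn/#|V|]_(c : colouring chi | proper c) lcs c.
End Hyper.

(* The Sudoku hypergraph SUD_m on the (m^2 x m^2) grid, 0-indexed. *)
Definition SUD_V (m : nat) : finType := ('I_(m ^ 2) * 'I_(m ^ 2))%type.

Definition SUD_E (m : nat) : {set {set SUD_V m}} :=
  [set [set x : SUD_V m | x.1 == i] | i : 'I_(m ^ 2)] :|:
  [set [set x : SUD_V m | x.2 == j] | j : 'I_(m ^ 2)] :|:
  [set [set x : SUD_V m | (x.1 %/ m == p.1) && (x.2 %/ m == p.2)]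
     | p : ('I_m * 'I_m)%type].

(* Main.v *)
Require Import Defs.
From mathcomp Require Import all_boot zify.
Set Implicit Arguments. Unset Strict Implicit. Unset Printing Implicit Defensive.

Lemma I2 (x y z : 'I_2) : z != x -> z != y -> x = y.
Proof. by case: x => [[|[|?]] ?]; case: y => [[|[|?]] ?]; case: z => [[|[|?]] ?] //=; move=> *; apply/val_inj. Qed.

Lemma sumS (m k x y : nat) : k < m -> \sum_(b < m) (if k == b then x else y) = x + (m - 1) * y.
Proof. move=> hk. rewrite (bigD1 (Ordinal hk)) //= eqxx.
rewrite (eq_bigr (fun _ => y)); last first.
  move=> i /negbTE h; have h' : (nat_of_ord i == k) = false := h. by rewrite eq_sym h'.
rewrite sum_nat_const. congr (_ + _ * _).
transitivity #|predC1 (Ordinal hk)|; first by apply: eq_card.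
by rewrite cardC1 card_ord subn1.
Qed.
Lemma sumI (m : nat) (P : nat -> bool) (k : nat) : k < m -> (forall b, P b = (k == b)) -> \sum_(b < m) (P b : nat) = 1.
Proof. move=> hk H. rewrite (eq_bigr (fun b : 'I_m => if k == b then 1 else 0)).
  by rewrite sumS // muln0 addn0.
by move=> b _; rewrite H; case: (_ == _). Qed.

Lemma bigmin_le_seq (I : eqType) (s : seq I) (P : pred I) (F : I -> nat) x j :
  j \in s -> P j -> \big[minn/x]_(i <- s | P i) F i <= F j.
Proof.
elim: s => // a s IH; rewrite inE big_cons => /orP [/eqP -> | js] Pj.
  by rewrite Pj geq_minl.
case: (P a); last exact: IH.
exact: leq_trans (geq_minr _ _) (IH js Pj).
Qed.

Lemma bigmin_le (I : finType) (P : pred I) (F : I -> nat) x j :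
  P j -> \big[minn/x]_(i | P i) F i <= F j.
Proof. by move=> Pj; apply: bigmin_le_seq => //; rewrite mem_index_enum. Qed.

Section Sud.
Variable m : nat.
Hypothesis m3 : 3 <= m.
Notation V := (SUD_V m).
Local Notation E := (SUD_E m).

Definition row (i : 'I_(m ^ 2)) : {set V} := [set x : V | x.1 == i].
Definition col (j : 'I_(m ^ 2)) : {set V} := [set x : V | x.2 == j].
Definition blk (p : 'I_m * 'I_m) : {set V} :=
  [set x : V | (x.1 %/ m == p.1) && (x.2 %/ m == p.2)].

Lemma E_eq : E = [set row i | i : 'I_(m ^ 2)] :|: [set col j | j : 'I_(m ^ 2)] :|:
  [set blk p | p : ('I_m * 'I_m)%type].
Proof. by []. Qed.

Lemma m0 : 0 < m. Proof. lia. Qed.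

Lemma cell_lt (a t : nat) : a < m -> t < m -> a * m + t < m ^ 2.
Proof. move=> ha ht. have -> : m ^ 2 = m * m by rewrite expnS expn1. nia. Qed.

Lemma div_lt (i : 'I_(m ^ 2)) : i %/ m < m.
Proof. rewrite ltn_divLR ?m0 //; have := ltn_ord i; by rewrite expnS expn1. Qed.

Lemma divcell (a t : nat) : t < m -> (a * m + t) %/ m = a.
Proof. move=> ht. by rewrite divnMDl ?m0 // divn_small // addn0. Qed.

Lemma modcell (a t : nat) : t < m -> (a * m + t) %% m = t.
Proof. move=> ht. by rewrite modnMDl modn_small. Qed.

Lemma pick3 (k x y : nat) : exists t, t < 3 /\ k + t != x /\ k + t != y.
Proof.
case: (eqVneq (k + 0) x) => h0; case: (eqVneq (k + 0) y) => h0';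
case: (eqVneq (k + 1) x) => h1; case: (eqVneq (k + 1) y) => h1';
try (by exists 0); try (by exists 1); exists 2; lia.
Qed.

Definition mkI (a t : nat) (ha : a < m) (ht : t < m) : 'I_(m ^ 2) :=
  Ordinal (cell_lt ha ht).

Definition owns (c : colouring V 2) (v : V) (e : {set V}) : bool :=
  (v \in e) && [forall w in e, (c w == c v) ==> (w == v)].

Definition Oset (c : colouring V 2) : {set V} :=
  [set v | [exists e in E, owns c v e]].

Lemma ownsP c v e : owns c v e -> v \in e /\ forall w, w \in e -> c w = c v -> w = v.
Proof.
case/andP=> ve /forall_inP H; split=> // w we cw.
by apply/eqP; move/implyP: (H w we); apply; apply/eqP.
Qed.

Lemma L2 c v w e f z : owns c v e -> owns c w f -> z \in e -> z \in f ->
  z != v -> z != w -> c v = c w.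
Proof.
move=> /ownsP [ve Hv] /ownsP [wf Hw] ze zf zv zw.
apply: (@I2 _ _ (c z)); apply/eqP => h.
- by move/eqP: zv; apply; apply: Hv.
- by move/eqP: zw; apply; apply: Hw.
Qed.

Lemma owner_uniq c v w e z : owns c v e -> owns c w e -> z \in e -> z != v -> z != w -> v = w.
Proof.
move=> ov ow ze zv zw. have h := L2 ov ow ze ze zv zw.
case/ownsP: ov => _ Hv. case/ownsP: ow => we _. by symmetry; apply: Hv.
Qed.


Lemma det_O (c : colouring V 2) S : Defs.proper E c -> determining E c S -> ~: S \subset Oset c.
Proof.
move=> pc Hdet; apply/subsetP => v; rewrite inE => vS.
pose fl := (if c v == ord0 then ord_max else ord0 : 'I_2).
have flne : fl != c v by rewrite /fl; case: (c v) => [[|[|?]] ?].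
pose c' : colouring V 2 := [ffun x => if x == v then fl else c x].
have npc' : ~~ Defs.proper E c'.
  apply/negP => pc'.
  move/forallP/(_ c'): Hdet; rewrite pc' /= => /implyP H.
  have agr : [forall x in S, c' x == c x].
    apply/forall_inP => x xS; rewrite ffunE; case: (eqVneq x v) => [xv|//].
    by move: vS; rewrite -xv xS.
  move/eqP: (H agr) => ec. have := congr1 (fun f : colouring V 2 => f v) ec.
  rewrite /= ffunE eqxx => h. by rewrite h eqxx in flne.
move: npc'; rewrite /Defs.proper negb_forall => /existsP [e].
rewrite negb_imply negbK => /andP [eE Hm].
move/forall_inP/(_ e eE): pc => pce.
have ve : v \in e.
  apply/negPn/negP => ve; move/negP: pce; apply.
  apply/forall_inP => x xe; apply/forall_inP => y ye.
  move/forall_inP/(_ x xe)/forall_inP/(_ y ye): Hm.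
  rewrite !ffunE; case: (eqVneq x v) => [xv|_]; first by move: ve; rewrite -xv xe.
  case: (eqVneq y v) => [yv|_] //; by move: ve; rewrite -yv ye.
rewrite inE; apply/exists_inP; exists e => //.
apply/andP; split => //; apply/forall_inP => w we; apply/implyP => /eqP cw.
case: (eqVneq w v) => // wv.
move/forall_inP/(_ w we)/forall_inP/(_ v ve): Hm.
rewrite !ffunE eqxx (negbTE wv) cw => /eqP h. by rewrite h eqxx in flne.
Qed.


Lemma z_rowblk (i : 'I_(m ^ 2)) (p : 'I_m * 'I_m) (v w : V) : i %/ m = p.1 ->
  exists z, [/\ z \in row i, z \in blk p, z != v & z != w].
Proof.
move=> ip; have [t [t3 [h1 h2]]] := pick3 (p.2 * m) v.2 w.2.
have tm : t < m by lia.
exists (i, mkI (ltn_ord p.2) tm); split.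
- by rewrite inE /=.
- by rewrite inE /= divcell // ip !eqxx.
- by apply: contra h1 => /eqP <-.
- by apply: contra h2 => /eqP <-.
Qed.

Lemma z_colblk (j : 'I_(m ^ 2)) (p : 'I_m * 'I_m) (v w : V) : j %/ m = p.2 ->
  exists z, [/\ z \in col j, z \in blk p, z != v & z != w].
Proof.
move=> jp; have [t [t3 [h1 h2]]] := pick3 (p.1 * m) v.1 w.1.
have tm : t < m by lia.
exists (mkI (ltn_ord p.1) tm, j); split.
- by rewrite inE /=.
- by rewrite inE /= divcell // jp !eqxx.
- by apply: contra h1 => /eqP <-.
- by apply: contra h2 => /eqP <-.
Qed.

Definition bo (v : V) : 'I_m * 'I_m := (Ordinal (div_lt v.1), Ordinal (div_lt v.2)).

Lemma in_blk (v : V) (p : 'I_m * 'I_m) : (v \in blk p) = (bo v == p).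
Proof. by rewrite inE; case: p => a b; rewrite /bo xpair_eqE. Qed.

Lemma z_row (i : 'I_(m ^ 2)) (v w : V) : exists z, [/\ z \in row i, z != v & z != w].
Proof.
have [z [? _ ? ?]] := @z_rowblk i (Ordinal (div_lt i), Ordinal (div_lt i)) v w erefl.
by exists z.
Qed.

Lemma z_col (j : 'I_(m ^ 2)) (v w : V) : exists z, [/\ z \in col j, z != v & z != w].
Proof.
have [z [? _ ? ?]] := @z_colblk j (Ordinal (div_lt j), Ordinal (div_lt j)) v w erefl.
by exists z.
Qed.

Lemma z_blk (p : 'I_m * 'I_m) (v w : V) : exists z, [/\ z \in blk p, z != v & z != w].
Proof.
have m2 : 0 < m ^ 2 by rewrite expn_gt0 m0.
have [z [? ? ? ?]] := @z_rowblk (mkI (ltn_ord p.1) m0) p v w (divcell _ m0).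
by exists z.
Qed.

Section Col.
Variable c : colouring V 2.

Lemma core_row v w i (p : 'I_m * 'I_m) : owns c v (row i) -> owns c w (blk p) -> i %/ m = p.1 -> c v = c w.
Proof.
move=> ov ow ip; have [z [zr zb zv zw]] := z_rowblk v w ip.
exact: L2 ov ow zr zb zv zw.
Qed.

Lemma core_col v w j (p : 'I_m * 'I_m) : owns c v (col j) -> owns c w (blk p) -> j %/ m = p.2 -> c v = c w.
Proof.
move=> ov ow jp; have [z [zr zb zv zw]] := z_colblk v w jp.
exact: L2 ov ow zr zb zv zw.
Qed.

Definition fresh v := ~~ owns c v (row v.1) && ~~ owns c v (col v.2).
Definition rown i := [exists v, owns c v (row i)].
Definition coln j := [exists v, owns c v (col j)].
Definition lostB (p : 'I_m * 'I_m) := ~~ [exists v, owns c v (blk p) && fresh v].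

Lemma row_of v i : v \in row i -> v.1 = i.
Proof. by rewrite inE => /eqP. Qed.
Lemma col_of v j : v \in col j -> v.2 = j.
Proof. by rewrite inE => /eqP. Qed.
Lemma blk_of v (p : 'I_m * 'I_m) : v \in blk p -> v.1 %/ m = p.1 /\ v.2 %/ m = p.2.
Proof. by rewrite inE => /andP [/eqP -> /eqP ->]. Qed.

Lemma B1 v i (p : 'I_m * 'I_m) : owns c v (row i) -> i %/ m = p.1 -> v \in blk p -> lostB p.
Proof.
move=> ov ip vb; apply/negP => /existsP [w /andP [ow /andP [fw _]]].
have cvw := core_row ov ow ip.
have [_ Hw] := ownsP ow. have vw := Hw v vb cvw.
have [vr _] := ownsP ov. move: fw; rewrite -vw (row_of vr). by rewrite ov.
Qed.

Lemma B2 (p : 'I_m * 'I_m) : (forall i : 'I_(m ^ 2), i %/ m = p.1 -> rown i) -> lostB p.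
Proof.
move=> H; apply/negP => /existsP [w /andP [ow /andP [fw _]]].
have [wb _] := ownsP ow. have [w1 _] := blk_of wb.
have /existsP [v ov] := H w.1 w1.
have cvw := core_row ov ow w1.
have [_ Hv] := ownsP ov.
have wv : w = v by apply: Hv; rewrite ?inE ?eqxx.
by move: fw; rewrite {1}wv ov.
Qed.

Lemma C1 v j (p : 'I_m * 'I_m) : owns c v (col j) -> j %/ m = p.2 -> v \in blk p -> lostB p.
Proof.
move=> ov jp vb; apply/negP => /existsP [w /andP [ow /andP [_ fw]]].
have cvw := core_col ov ow jp.
have [_ Hw] := ownsP ow. have vw := Hw v vb cvw.
have [vr _] := ownsP ov. move: fw; rewrite -vw (col_of vr). by rewrite ov.
Qed.

Lemma C2 (p : 'I_m * 'I_m) : (forall j : 'I_(m ^ 2), j %/ m = p.2 -> coln j) -> lostB p.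
Proof.
move=> H; apply/negP => /existsP [w /andP [ow /andP [_ fw]]].
have [wb _] := ownsP ow. have [_ w2] := blk_of wb.
have /existsP [v ov] := H w.2 w2.
have cvw := core_col ov ow w2.
have [_ Hv] := ownsP ov.
have wv : w = v by apply: Hv; rewrite ?inE ?eqxx.
by move: fw; rewrite {1}wv ov.
Qed.

End Col.

Lemma partR (P : pred 'I_(m ^ 2)) :
  #|[set i | P i]| = \sum_(a < m) #|[set i : 'I_(m ^ 2) | (i %/ m == a) && P i]|.
Proof.
rewrite -sum1_card (partition_big (fun i => Ordinal (div_lt i)) predT) //=.
apply: eq_bigr => a _; rewrite -sum1_card; apply: eq_bigl => i.
by rewrite !inE andbC.
Qed.

Lemma partB (Q : pred ('I_m * 'I_m)) :
  #|[set p | Q p]| = \sum_(a < m) #|[set b : 'I_m | Q (a, b)]|.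
Proof.
rewrite -sum1_card big_mkcond /=.
transitivity (\sum_(a < m) \sum_(b < m) (if Q (a, b) then 1 else 0)).
  rewrite pair_bigA /=; apply: congr_big => // p _; case: p => a b; by rewrite inE.
apply: congr_big => // a _; rewrite -sum1_card [RHS]big_mkcond /=; apply: congr_big => // b _; by rewrite inE.
Qed.

Lemma partB2 (Q : pred ('I_m * 'I_m)) :
  #|[set p | Q p]| = \sum_(b < m) #|[set a : 'I_m | Q (a, b)]|.
Proof.
rewrite -sum1_card big_mkcond /=.
transitivity (\sum_(a < m) \sum_(b < m) (if Q (a, b) then 1 else 0)).
  rewrite pair_bigA /=; apply: congr_big => // p _; case: p => a b; by rewrite inE.
rewrite exchange_big /=.
apply: congr_big => // b _; rewrite -sum1_card [RHS]big_mkcond /=; apply: congr_big => // a _; by rewrite inE.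
Qed.

Section Col2.
Variable c : colouring V 2.

Lemma band (a : 'I_m) :
  3 <= 2 * #|[set i : 'I_(m ^ 2) | (i %/ m == a) && ~~ rown c i]| +
       #|[set b : 'I_m | lostB c (a, b)]|.
Proof.
case: (boolP [exists i : 'I_(m ^ 2), (i %/ m == a) && rown c i]).
- move/existsP => [i /andP [/eqP ia /existsP [v ov]]].
  pose b := Ordinal (div_lt v.2).
  have [vr _] := ownsP ov.
  have vb : v \in blk (a, b) by rewrite inE /= (row_of vr) ia !eqxx.
  have lb := B1 ov (ia : i %/ m = (a, b).1) vb.
  have x1 : 0 < #|[set b | lostB c (a, b)]|.
    by rewrite card_gt0; apply/set0Pn; exists b; rewrite inE.
  case: (eqVneq #|[set i : 'I_(m ^ 2) | (i %/ m == a) && ~~ rown c i]| 0) => k0; last by move: k0 x1; rewrite -lt0n; move: (#|_|) => k; move: (#|_|) => x; lia.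
  have all : forall b', lostB c (a, b').
    move=> b'; apply: B2 => i' /= i'a.
    move/eqP: k0; rewrite cards_eq0 => /eqP/setP/(_ i'); rewrite !inE i'a eqxx /=.
    by move/negbFE.
  have -> : [set b | lostB c (a, b)] = setT by apply/setP => b'; rewrite !inE all.
  by rewrite cardsT card_ord k0.
- rewrite negb_exists => /forallP H.
  have m1 : 1 < m by lia.
  pose i0 := mkI (ltn_ord a) m0. pose i1 := mkI (ltn_ord a) m1.
  have sub : [set i0; i1] \subset [set i : 'I_(m ^ 2) | (i %/ m == a) && ~~ rown c i].
    have H' : forall i : 'I_(m ^ 2), i %/ m == a -> ~~ rown c i by move=> i ia; move: (H i); rewrite ia.
    apply/subsetP => i; rewrite !inE => /orP [] /eqP ->; rewrite H' ?andbT //= divcell //; lia.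
  have := subset_leq_card sub. rewrite cards2.
  have -> : (i0 != i1) by apply/negP => /eqP /(congr1 val) /= /eqP; rewrite eqn_add2l.
  lia.
Qed.

Lemma stack (b : 'I_m) :
  3 <= 2 * #|[set j : 'I_(m ^ 2) | (j %/ m == b) && ~~ coln c j]| +
       #|[set a : 'I_m | lostB c (a, b)]|.
Proof.
case: (boolP [exists j : 'I_(m ^ 2), (j %/ m == b) && coln c j]).
- move/existsP => [j /andP [/eqP jb /existsP [v ov]]].
  pose a := Ordinal (div_lt v.1).
  have [vr _] := ownsP ov.
  have vb : v \in blk (a, b) by rewrite inE /= (col_of vr) jb !eqxx.
  have lb := C1 ov (jb : j %/ m = (a, b).2) vb.
  have x1 : 0 < #|[set a | lostB c (a, b)]|.
    by rewrite card_gt0; apply/set0Pn; exists a; rewrite inE.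
  case: (eqVneq #|[set j : 'I_(m ^ 2) | (j %/ m == b) && ~~ coln c j]| 0) => k0; last by move: k0 x1; rewrite -lt0n; move: (#|_|) => k; move: (#|_|) => x; lia.
  have all : forall a', lostB c (a', b).
    move=> a'; apply: C2 => j' /= j'b.
    move/eqP: k0; rewrite cards_eq0 => /eqP/setP/(_ j'); rewrite !inE j'b eqxx /=.
    by move/negbFE.
  have -> : [set a | lostB c (a, b)] = setT by apply/setP => a'; rewrite !inE all.
  by rewrite cardsT card_ord k0.
- rewrite negb_exists => /forallP H.
  have m1 : 1 < m by lia.
  pose j0 := mkI (ltn_ord b) m0. pose j1 := mkI (ltn_ord b) m1.
  have sub : [set j0; j1] \subset [set j : 'I_(m ^ 2) | (j %/ m == b) && ~~ coln c j].
    have H' : forall j : 'I_(m ^ 2), j %/ m == b -> ~~ coln c j by move=> j ia; move: (H j); rewrite ia.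
    apply/subsetP => j; rewrite !inE => /orP [] /eqP ->; rewrite H' ?andbT //= divcell //; lia.
  have := subset_leq_card sub. rewrite cards2.
  have -> : (j0 != j1) by apply/negP => /eqP /(congr1 val) /= /eqP; rewrite eqn_add2l.
  lia.
Qed.

Lemma rows_ineq : 3 * m <= 2 * #|[set i | ~~ rown c i]| + #|[set p | lostB c p]|.
Proof.
rewrite partR partB big_distrr -big_split /=.
have -> : 3 * m = \sum_(a < m) 3 by rewrite sum_nat_const card_ord mulnC.
by apply: leq_sum => a _; apply: band.
Qed.

Lemma cols_ineq : 3 * m <= 2 * #|[set j | ~~ coln c j]| + #|[set p | lostB c p]|.
Proof.
rewrite partR partB2 big_distrr -big_split /=.
have -> : 3 * m = \sum_(a < m) 3 by rewrite sum_nat_const card_ord mulnC.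
by apply: leq_sum => b _; apply: stack.
Qed.

End Col2.

Section Bound.
Variable c : colouring V 2.

Definition OR := [set v : V | owns c v (row v.1)].
Definition OC := [set v : V | owns c v (col v.2)].
Definition OB := [set v : V | owns c v (blk (bo v)) && fresh c v].

Lemma O_sub : Oset c \subset OR :|: OC :|: OB.
Proof.
apply/subsetP => v; rewrite inE => /exists_inP [e eE ov].
rewrite !inE.
case: (boolP (owns c v (row v.1))) => //= nr.
case: (boolP (owns c v (col v.2))) => //= nc.
rewrite /fresh nr nc andbT.
move: eE; rewrite E_eq !inE => /orP [/orP [] | ] /imsetP [x _ ex]; subst e.
- have [vr _] := ownsP ov. by move: nr; rewrite (row_of vr) ov.
- have [vr _] := ownsP ov. by move: nc; rewrite (col_of vr) ov.
- have [vb _] := ownsP ov. move: (vb); rewrite in_blk => /eqP ->. by rewrite ov.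
Qed.

Lemma OR_card : #|OR| <= #|[set i | rown c i]|.
Proof.
rewrite /OR.
rewrite -(@card_in_imset _ _ (fun v : V => v.1)).
  apply: subset_leq_card; apply/subsetP => i /imsetP [v]; rewrite inE => ov ->.
  by rewrite inE; apply/existsP; exists v.
move=> v w; rewrite !inE => ov ow /= e1.
have [z [zr zv zw]] := z_row v.1 v w.
by apply: (owner_uniq ov _ zr zv zw); rewrite e1.
Qed.

Lemma OC_card : #|OC| <= #|[set j | coln c j]|.
Proof.
rewrite /OC.
rewrite -(@card_in_imset _ _ (fun v : V => v.2)).
  apply: subset_leq_card; apply/subsetP => i /imsetP [v]; rewrite inE => ov ->.
  by rewrite inE; apply/existsP; exists v.
move=> v w; rewrite !inE => ov ow /= e1.
have [z [zr zv zw]] := z_col v.2 v w.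
by apply: (owner_uniq ov _ zr zv zw); rewrite e1.
Qed.

Lemma OB_card : #|OB| <= #|[set p | ~~ lostB c p]|.
Proof.
rewrite /OB.
rewrite -(@card_in_imset _ _ bo).
  apply: subset_leq_card; apply/subsetP => p /imsetP [v]; rewrite inE => /andP [ov fv] ->.
  by rewrite inE negbK; apply/existsP; exists v; rewrite ov fv.
move=> v w; rewrite !inE => /andP [ov _] /andP [ow _] e1.
have [z [zr zv zw]] := z_blk (bo v) v w.
by apply: (owner_uniq ov _ zr zv zw); rewrite e1.
Qed.

Lemma compl_card (T : finType) (P : pred T) : #|[set x | P x]| + #|[set x | ~~ P x]| = #|T|.
Proof.
rewrite -(cardsC [set x | P x]); congr (_ + _); apply: eq_card => x; by rewrite !inE.
Qed.

Lemma O_bound : #|Oset c| <= 3 * m ^ 2 - 3 * m.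
Proof.
have h1 := subset_leq_card O_sub.
have h2 : #|OR :|: OC :|: OB| <= #|OR| + #|OC| + #|OB|.
  apply: (leq_trans (leq_card_setU _ _)); rewrite leq_add2r; exact: leq_card_setU.
have r1 := OR_card. have r2 := OC_card. have r3 := OB_card.
have e1 := compl_card (rown c). have e2 := compl_card (coln c).
have e3 := compl_card (fun p => ~~ lostB c p).
rewrite card_prod !card_ord in e1 e2 e3.
have i1 := rows_ineq c. have i2 := cols_ineq c.
have E3 : [set p | ~~ ~~ lostB c p] = [set p | lostB c p].
  by apply/setP => p; rewrite !inE negbK.
rewrite E3 in e3.
have mm : m ^ 2 = m * m by rewrite expnS expn1.
move: h1 h2 r1 r2 r3 e1 e2 e3 i1 i2.
move: (#|Oset c|) (#|OR :|: OC :|: OB|) (#|OR|) (#|OC|) (#|OB|) => a b c1 c2 c3.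
move: (#|[set i | rown c i]|) (#|[set i | ~~ rown c i]|) => d1 d2.
move: (#|[set i | coln c i]|) (#|[set i | ~~ coln c i]|) => f1 f2.
move: (#|[set p | ~~ lostB c p]|) (#|[set p | lostB c p]|) => g1 g2.
rewrite mm; move: (m * m) => M. lia.
Qed.

End Bound.

Definition Pn (i j : nat) : bool :=
  if i %/ m == j %/ m then (i %% m == 0) != (j %% m == 0)
  else (i %% m == 0) && (j %% m == 0).

Definition c0 : colouring V 2 := [ffun x : V => if Pn x.1 x.2 then ord_max else ord0].

Lemma c0_eq x y : (c0 x == c0 y) = (Pn x.1 x.2 == Pn y.1 y.2).
Proof. by rewrite !ffunE; case: (Pn x.1 x.2); case: (Pn y.1 y.2). Qed.

Lemma pair_eq (v w : V) : (v.1 : nat) = w.1 -> (v.2 : nat) = w.2 -> v = w.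
Proof. by case: v w => [v1 v2] [w1 w2] /= /val_inj -> /val_inj ->. Qed.

Lemma qr_eq (x y : nat) : x %/ m = y %/ m -> x %% m = y %% m -> x = y.
Proof. by move=> h1 h2; rewrite (divn_eq x m) (divn_eq y m) h1 h2. Qed.

Lemma Pn_cell a r b s : r < m -> s < m ->
  Pn (a * m + r) (b * m + s) =
  if a == b then (r == 0) != (s == 0) else (r == 0) && (s == 0).
Proof. by move=> hr hs; rewrite /Pn !divcell // !modcell. Qed.

Lemma Pn_cellr (i : nat) b s : s < m ->
  Pn i (b * m + s) =
  if i %/ m == b then (i %% m == 0) != (s == 0) else (i %% m == 0) && (s == 0).
Proof. by move=> hs; rewrite /Pn !divcell // !modcell. Qed.

Lemma Pn_celll (j : nat) a r : r < m ->
  Pn (a * m + r) j =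
  if a == j %/ m then (r == 0) != (j %% m == 0) else (r == 0) && (j %% m == 0).
Proof. by move=> hr; rewrite /Pn !divcell // !modcell. Qed.

Lemma other (a : 'I_m) : exists b : 'I_m, (b : nat) != a.
Proof.
have m1 : 1 < m by lia.
case: (eqVneq (a : nat) 0) => a0.
- by exists (Ordinal m1); rewrite /= a0.
- by exists (Ordinal m0); rewrite /= eq_sym.
Qed.

Lemma zeros e : e \in E -> exists z1 z2, [/\ z1 \in e, z2 \in e, z1 != z2, ~~ Pn z1.1 z1.2 & ~~ Pn z2.1 z2.2].
Proof.
have m1 : 1 < m by lia. have m2 : 2 < m by lia.
rewrite E_eq !inE => /orP [/orP [] | ] /imsetP [x _ ->].
- have [b hb] := other (Ordinal (div_lt x)).
  exists (x, mkI (ltn_ord b) m1), (x, mkI (ltn_ord b) m2); split; rewrite ?inE //=.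
  + by apply/negP => /eqP [] /eqP; rewrite eqn_add2l.
  + by rewrite Pn_cellr // eq_sym (negbTE hb) andbF.
  + by rewrite Pn_cellr // eq_sym (negbTE hb) andbF.
- have [b hb] := other (Ordinal (div_lt x)).
  exists (mkI (ltn_ord b) m1, x), (mkI (ltn_ord b) m2, x); split; rewrite ?inE //=.
  + by apply/negP => /eqP [] /eqP; rewrite eqn_add2l.
  + by rewrite Pn_celll // (negbTE hb).
  + by rewrite Pn_celll // (negbTE hb).
- exists (mkI (ltn_ord x.1) m1, mkI (ltn_ord x.2) m1), (mkI (ltn_ord x.1) m1, mkI (ltn_ord x.2) m2);
  split; rewrite ?inE /= ?divcell ?eqxx //.
  + by apply/negP => /eqP [] /eqP; rewrite eqn_add2l.
  + by rewrite Pn_cell //; case: ifP.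
  + by rewrite Pn_cell //; case: ifP.
Qed.

Lemma ones e : e \in E -> exists z, z \in e /\ Pn z.1 z.2.
Proof.
have m0' : 0 < m := m0.
rewrite E_eq !inE => /orP [/orP [] | ] /imsetP [x _ ->].
- have ht : ((x %% m == 0) : nat) < m by case: (_ == 0); lia.
  exists (x, mkI (div_lt x) ht); split; rewrite ?inE //=.
  by rewrite Pn_cellr // eqxx; case: (x %% m == 0).
- have ht : ((x %% m == 0) : nat) < m by case: (_ == 0); lia.
  exists (mkI (div_lt x) ht, x); split; rewrite ?inE //=.
  by rewrite Pn_celll // eqxx; case: (x %% m == 0).
- have m1 : 1 < m by lia.
  case: (eqVneq (x.1 : nat) x.2) => hx.
  + exists (mkI (ltn_ord x.1) m1, mkI (ltn_ord x.2) m0); split; rewrite ?inE /= ?divcell ?eqxx //; try exact: m0.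
    rewrite Pn_cell //; case: ifP => // /negbT/negP []; apply/eqP; exact: hx.
  + exists (mkI (ltn_ord x.1) m0, mkI (ltn_ord x.2) m0); split; rewrite ?inE /= ?divcell ?eqxx //; try exact: m0.
    rewrite Pn_cell //; case: ifP => //= /eqP h; by move/eqP: hx.
Qed.


Lemma reidx (F : nat -> nat) : \sum_(i < m ^ 2) F i = \sum_(a < m) \sum_(r < m) F (a * m + r).
Proof.
have mm : m ^ 2 = m * m by rewrite expnS expn1.
rewrite mm.
suff H : forall k, \sum_(i < k * m) F i = \sum_(a < k) \sum_(r < m) F (a * m + r) by apply: H.
elim=> [|k IH]; first by rewrite mul0n !big_ord0.
by rewrite big_ord_recr /= -IH mulSnr big_split_ord /=.
Qed.

Lemma sum_s (a r b : nat) : r < m ->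
  \sum_(s < m) (Pn (a * m + r) (b * m + s) : nat) =
  if a == b then (if r == 0 then m - 1 else 1) else (if r == 0 then 1 else 0).
Proof.
move=> hr.
rewrite (eq_bigr (fun s : 'I_m => if 0 == s then (if a == b then ((r != 0) : nat) else ((r == 0) : nat))
                                  else (if a == b then ((r == 0) : nat) else 0))).
  rewrite sumS ?m0 //.
  by case: (a == b); case: (r == 0); rewrite /= ?muln0 ?muln1 ?addn0 ?add0n.
move=> s _; rewrite Pn_cell // [0 == _]eq_sym.
by case: (nat_of_ord s == 0); case: (a == b); case: (r == 0).
Qed.

Lemma card_ones : #|[set v : V | Pn v.1 v.2]| = 3 * m ^ 2 - 3 * m.
Proof.
transitivity (\sum_(i < m ^ 2) \sum_(j < m ^ 2) (Pn i j : nat)).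
  rewrite -sum1_card big_mkcond /= pair_bigA /=.
  by apply: congr_big => // -[i j] _; rewrite inE; case: Pn.
rewrite (reidx (fun i => \sum_(j < m ^ 2) (Pn i j : nat))).
transitivity (\sum_(a < m) \sum_(r < m) (if 0 == r then 2 * (m - 1) else 1)).
  apply: eq_bigr => a _; apply: eq_bigr => r _.
  rewrite (reidx (fun j => (Pn (a * m + r) j : nat))).
  rewrite (eq_bigr (fun b : 'I_m => if (a : nat) == b then (if (r : nat) == 0 then m - 1 else 1)
                                    else (if (r : nat) == 0 then 1 else 0))).
    rewrite sumS // [0 == _]eq_sym.
    case: (nat_of_ord r == 0); rewrite ?muln1 ?muln0 ?addn0; lia.
  by move=> b _; rewrite sum_s.
under eq_bigr => a _ do rewrite sumS ?m0 //.
rewrite sum_nat_const card_ord.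
have mm : m ^ 2 = m * m by rewrite expnS expn1.
rewrite mm. nia.
Qed.


Lemma row_in i : row i \in E.
Proof. by rewrite E_eq !inE imset_f. Qed.
Lemma col_in j : col j \in E.
Proof. by rewrite E_eq !inE imset_f ?orbT. Qed.
Lemma blk_in p : blk p \in E.
Proof. by rewrite E_eq !inE imset_f ?orbT. Qed.

Lemma c0_proper : Defs.proper E c0.
Proof.
apply/forall_inP => e eE.
have [z [ze pz]] := ones eE. have [z1 [z2 [z1e _ _ p1 _]]] := zeros eE.
apply/negP => /forall_inP /(_ z ze) /forall_inP /(_ z1 z1e).
by rewrite c0_eq pz (negbTE p1).
Qed.

Lemma c0_owner (v : V) e : e \in E -> owns c0 v e -> Pn v.1 v.2.
Proof.
move=> eE ov; apply/negPn/negP => pv.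
have [z1 [z2 [z1e z2e z12 p1 p2]]] := zeros eE.
have [_ H] := ownsP ov.
have e1 : z1 = v by apply: H => //; apply/eqP; rewrite c0_eq (negbTE p1) (negbTE pv).
have e2 : z2 = v by apply: H => //; apply/eqP; rewrite c0_eq (negbTE p2) (negbTE pv).
by move: z12; rewrite e1 e2 eqxx.
Qed.

Lemma pv_col (x y : nat) : Pn x y -> x %/ m = y %/ m -> x %% m = 0 -> y %% m != 0.
Proof. by rewrite /Pn => + hab hr; rewrite hab eqxx hr eqxx; case: (y %% m == 0). Qed.

Lemma pv_row (x y : nat) : Pn x y -> x %/ m = y %/ m -> x %% m != 0 -> y %% m = 0.
Proof. by rewrite /Pn => + hab hr; rewrite hab eqxx (negbTE hr); case: (eqVneq (y %% m) 0) => // /negbTE ->. Qed.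

Lemma pv_blk (x y : nat) : Pn x y -> x %/ m != y %/ m -> x %% m = 0 /\ y %% m = 0.
Proof. by rewrite /Pn => + hab; rewrite (negbTE hab) => /andP [/eqP -> /eqP ->]. Qed.

Lemma col_case (x y j : nat) : y %% m = 0 -> y %/ m = j %/ m -> j %% m != 0 -> Pn x j -> x = y.
Proof.
move=> hr hab hs; rewrite /Pn (negbTE hs) andbF.
case: eqP => //= h H; have h2 : x %% m = 0 by apply/eqP; move: H; case: (_ == 0).
by apply: qr_eq; rewrite ?h ?hab ?h2 ?hr.
Qed.

Lemma row_case (i j y : nat) : i %% m != 0 -> i %/ m = y %/ m -> y %% m = 0 -> Pn i j -> j = y.
Proof.
move=> hr hab hs; rewrite /Pn (negbTE hr) /=.
case: eqP => //= h H; have h2 : j %% m = 0 by apply/eqP; move: H; case: (_ == 0).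
by apply: qr_eq; [rewrite -h hab | rewrite h2 hs].
Qed.

Lemma blk_case (x y x' y' : nat) : x %/ m != y %/ m -> x' %/ m = x %/ m -> y' %/ m = y %/ m ->
  x %% m = 0 -> y %% m = 0 -> Pn x' y' -> x' = x /\ y' = y.
Proof.
move=> hab h1 h2 hr hs; rewrite /Pn h1 h2 (negbTE hab) => /andP [/eqP h3 /eqP h4].
by split; apply: qr_eq; rewrite ?h1 ?h2 ?h3 ?h4 ?hr ?hs.
Qed.

Lemma ones_own (v : V) : Pn v.1 v.2 -> v \in Oset c0.
Proof.
move=> pv; rewrite inE.
have same : forall w : V, c0 w = c0 v -> Pn w.1 w.2.
  by move=> w /eqP; rewrite c0_eq pv => /eqP.
case: (eqVneq (v.1 %/ m) (v.2 %/ m)) => hab.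
- case: (eqVneq (v.1 %% m) 0) => hr.
  + have hs := pv_col pv hab hr.
    apply/exists_inP; exists (col v.2); first exact: col_in.
    apply/andP; split; first by rewrite inE.
    apply/forall_inP => w; rewrite inE => /eqP w2; apply/implyP => /eqP cw.
    apply/eqP; apply: pair_eq; last by rewrite w2.
    have h := same w cw. rewrite w2 in h.
    exact: (col_case hr hab hs h).
  + have hs := pv_row pv hab hr.
    apply/exists_inP; exists (row v.1); first exact: row_in.
    apply/andP; split; first by rewrite inE.
    apply/forall_inP => w; rewrite inE => /eqP w1; apply/implyP => /eqP cw.
    apply/eqP; apply: pair_eq; first by rewrite w1.
    have h := same w cw. rewrite w1 in h.
    exact: (row_case hr hab hs h).
- have [hr hs] := pv_blk pv hab.
  apply/exists_inP; exists (blk (bo v)); first exact: blk_in.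
  apply/andP; split; first by rewrite in_blk.
  apply/forall_inP => w wb; apply/implyP => /eqP cw.
  have [h1 h2] := blk_of wb.
  have [e1 e2] := blk_case hab h1 h2 hr hs (same w cw).
  by apply/eqP; apply: pair_eq.
Qed.

Lemma O_c0 : Oset c0 = [set v : V | Pn v.1 v.2].
Proof.
apply/setP => v; rewrite [RHS]inE; apply/idP/idP; last exact: ones_own.
by rewrite inE => /exists_inP [e eE ov]; apply: c0_owner ov.
Qed.

Lemma rigid (c : colouring V 2) :
  (forall v w, v \in Oset c -> w \in Oset c -> c v = c w) -> determining E c (~: Oset c).
Proof.
move=> Hsame; apply/forallP => c'; apply/implyP => pc'; apply/implyP => /forall_inP agr.
apply/eqP/ffunP => v.
case: (boolP (v \in Oset c)) => vO; last by apply/eqP; apply: agr; rewrite inE.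
case: (eqVneq (c' v) (c v)) => // ne.
move: (vO); rewrite inE => /exists_inP [e eE ov].
have [ve Hv] := ownsP ov.
have other : forall w, w \in e -> c' w = c' v.
  move=> w we; case: (eqVneq w v) => [-> //|wv].
  have cwv : c w != c v by apply: contra wv => /eqP h; apply/eqP; apply: Hv.
  have wO : w \notin Oset c by apply: contra cwv => wO; apply/eqP; apply: Hsame.
  have -> : c' w = c w by apply/eqP; apply: agr; rewrite inE.
  by apply: (@I2 _ _ (c v)); rewrite eq_sym.
move/forall_inP/(_ e eE): pc' => /negP; case.
apply/forall_inP => x xe; apply/forall_inP => y ye.
by rewrite (other x xe) (other y ye).
Qed.


Lemma cardV : #|V| = m ^ 4.
Proof. by rewrite card_prod card_ord -expnD. Qed.

Lemma v0 : V.
Proof. have h : 0 < m ^ 2 by rewrite expn_gt0 m0. exact: (Ordinal h, Ordinal h). Qed.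

Lemma chi2 : chi E = 2.
Proof.
rewrite /chi.
have nV : 0 < #|V| by apply/card_gt0P; exists v0.
apply/eqP; rewrite eqn_leq; apply/andP; split.
- have h2 : 2 < #|V|.+2 by rewrite ltnS.
  apply: (@bigmin_le _ _ (fun k : 'I_(#|V|.+2) => nat_of_ord k) _ (Ordinal h2)).
  by apply/existsP; exists c0; exact: c0_proper.
- apply: (big_ind (fun x => 2 <= x)) => //.
  + by move=> x y hx hy; rewrite leq_min hx hy.
  + move=> [[|[|k]] hk] //= /existsP [c pc].
    * by case: (c v0).
    * have h : 0 < m ^ 2 by rewrite expn_gt0 m0.
      move/forall_inP: pc => /(_ (row (Ordinal h)) (row_in _)) /negP; case.
      apply/forall_inP => x _; apply/forall_inP => y _.
      by case: (c x) => [[|?] ?]; case: (c y) => [[|?] ?].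
Qed.

Definition Bd := m ^ 4 - 3 * m ^ 2 + 3 * m.

Lemma arith : 3 * m <= 3 * m ^ 2 /\ 3 * m ^ 2 <= m ^ 4.
Proof.
have mm : m ^ 2 = m * m by rewrite expnS expn1.
have m4 : m ^ 4 = m * m * (m * m) by rewrite (_ : 4 = 2 + 2) // expnD mm.
rewrite m4 mm; split; nia.
Qed.

Lemma det_ge (c : colouring V 2) S : Defs.proper E c -> determining E c S -> Bd <= #|S|.
Proof.
move=> pc dS.
have h1 := subset_leq_card (det_O pc dS).
have h2 := O_bound c. have h3 := cardsC S. rewrite cardV in h3.
have [a1 a2] := arith. rewrite /Bd.
move: h1 h2 h3 a1 a2; move: (#|~: S|) (#|S|) (#|Oset c|) (m ^ 4) (m ^ 2) => x y z M4 M2. lia.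
Qed.

Lemma detT (c : colouring V 2) : determining E c setT.
Proof.
apply/forallP => c'; apply/implyP => _; apply/implyP => /forall_inP agr.
by apply/eqP/ffunP => x; apply/eqP; apply: agr; rewrite inE.
Qed.

Lemma crit_exists (c : colouring V 2) : exists S, critical E c S.
Proof.
have ex : exists n, [exists S : {set V}, determining E c S && (#|S| == n)].
  by exists #|[set: V]|; apply/existsP; exists setT; rewrite detT eqxx.
case: (ex_minnP ex) => n /existsP [S /andP [dS /eqP cS]] Hmin.
exists S; rewrite /critical dS /=; apply/forallP => S'; apply/implyP => pS'.
apply/negP => dS'.
have := Hmin #|S'|; rewrite -cS.
have -> : [exists S0, determining E c S0 && (#|S0| == #|S'|)] by apply/existsP; exists S'; rewrite dS' eqxx.
move=> /(_ isT); have := proper_card pS'. lia.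
Qed.

Definition S0 := ~: Oset c0.

Lemma S0_det : determining E c0 S0.
Proof.
apply: rigid => v w; rewrite !O_c0 !inE => pv pw.
by rewrite !ffunE pv pw.
Qed.

Lemma S0_sub S : determining E c0 S -> S0 \subset S.
Proof. by move=> dS; rewrite /S0 -setCS setCK; apply: det_O dS; exact: c0_proper. Qed.

Lemma S0_crit : critical E c0 S0.
Proof.
rewrite /critical S0_det /=; apply/forallP => S'; apply/implyP => pS'.
apply/negP => dS'. have := S0_sub dS'. move: pS'; rewrite properE => /andP [_ /negP]; by [].
Qed.

Lemma S0_card : #|S0| = Bd.
Proof.
have h := cardsC (Oset c0). rewrite cardV O_c0 card_ones -O_c0 in h.
rewrite /S0 /Bd. have [a1 a2] := arith.
move: h a1 a2; move: (#|~: Oset c0|) (#|Oset c0|) (m ^ 4) (m ^ 2) => x y M4 M2. lia.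
Qed.

Lemma crit_c0 S : critical E c0 S -> #|S| <= Bd.
Proof.
case/andP => dS /forallP H.
have sub := S0_sub dS.
have : ~~ (S0 \proper S) by apply/negP => pr; move/implyP: (H S0) => /(_ pr); rewrite S0_det.
rewrite properE sub /= negbK => sub2.
by rewrite -S0_card subset_leq_card.
Qed.

Lemma main : sn E = Bd /\ lcs_min E = Bd.
Proof.
have BdV : Bd <= #|V| by rewrite cardV /Bd; have [a1 a2] := arith; lia.
rewrite /sn /lcs_min chi2; split; apply/eqP; rewrite eqn_leq; apply/andP; split.
- apply: leq_trans (bigmin_le _ _ c0_proper) _.
  apply: leq_trans (bigmin_le _ _ S0_crit) _.
  by rewrite S0_card.
- apply: (big_ind (fun x => Bd <= x)) => //.
    by move=> x y hx hy; rewrite leq_min hx hy.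
  move=> c pc; rewrite /scs.
  apply: (big_ind (fun x => Bd <= x)) => //.
    by move=> x y hx hy; rewrite leq_min hx hy.
  by move=> S /andP [dS _]; apply: det_ge pc dS.
- apply: leq_trans (bigmin_le _ _ c0_proper) _.
  by apply/bigmax_leqP => S; apply: crit_c0.
- apply: (big_ind (fun x => Bd <= x)) => //.
    by move=> x y hx hy; rewrite leq_min hx hy.
  move=> c pc; have [S cS] := crit_exists c.
  apply: leq_trans (leq_bigmax_cond _ cS).
  by case/andP: cS => dS _; apply: det_ge pc dS.
Qed.

End Sud.

Theorem proposition7 (m : nat) : 3 <= m ->
  sn (SUD_E m) = m ^ 4 - 3 * m ^ 2 + 3 * m /\
  lcs_min (SUD_E m) = m ^ 4 - 3 * m ^ 2 + 3 * m.
Proof. move=> m3; exact: (main m3). Qed.
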